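(* Let $N\ge M\ge1$, let $(w_1,\dots,w_N)$ be a (generic) alphabet and let $y=(y_1,\dots,y_M)\in\mathbb{Z}^M$ be any collection of integers. Then for every $k\in\{1,\dots,N\}$, \[\mathcal{F}_y(w_1,\dots,w_N)\big|_{w_k=0}=\alpha\,\mathcal{F}_y(w_1,\dots,w_{k-1},w_{k+1},\dots,w_N).\]
   Context: $q>0$, $q\ne1$, $\alpha\ge0$. $\mathcal{B}_N$ is the group of signed permutations of $\{1,\dots,N\}$ acting by $\sigma(f(w_1,\dots,w_N))=f(w_{\sigma(1)},\dots,w_{\sigma(N)})$ with $w_{-k}:=1/(qw_k)$. With $V_k=\frac{q^{\binom{k}{2}}(1-q)^k}{\prod_{i=1}^k(1-q^i)(1+q^{i-1})}$ and $\varphi_y(w)=\frac{1-q-\alpha+\alpha w}{1-qw^2}\frac{(1-q)w}{1-w}\left(\frac{1-qw}{1-w}\right)^{y-1}$, for an alphabet of length $n\ge M$, \[\mathcal{F}_y(w_1,\dots,w_n)=V_{n-M}\alpha^{n-M}\sum_{\sigma\in\mathcal{B}_n}\sigma\!\left(\prod_{1\le i<j\le n}\left[\frac{w_i-qw_j}{w_i-w_j}\frac{1-w_iw_j}{1-qw_iw_j}\right]\prod_{i=1}^M\varphi_{y_i}(w_i)\right),\] and $\mathcal{F}_y(w_1,\dots,w_n):=0$ if $n<M$. *)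

(* Defs.v *)
From HB Require Import structures.
From mathcomp Require Import all_boot all_order all_algebra all_fingroup.
From mathcomp Require Import all_classical all_reals all_analysis.
Set Implicit Arguments. Unset Strict Implicit. Unset Printing Implicit Defensive.
Import Order.TTheory GRing.Theory Num.Theory.
Local Open Scope ring_scope.

Section Defs.
Variable R : realType.

Definition Vk (q : R) (k : nat) : R :=
  q ^+ 'C(k, 2) * (1 - q) ^+ k /
  \prod_(1 <= i < k.+1) ((1 - q ^+ i) * (1 + q ^+ i.-1)).

Definition phi (q alpha : R) (y : int) (w : R) : R :=
  (1 - q - alpha + alpha * w) / (1 - q * w ^+ 2) * ((1 - q) * w / (1 - w))
  * ((1 - q * w) / (1 - w)) ^ (y - 1).

Definition pairf (q a b : R) : R :=
  (a - q * b) / (a - b) * ((1 - a * b) / (1 - q * a * b)).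

(* w_{-k} := 1/(q w_k) : the value of the signed letter *)
Definition signed_val (q : R) (neg : bool) (x : R) : R :=
  if neg then 1 / (q * x) else x.

(* The letters (w_{sigma(1)}, ..., w_{sigma(n)}) for the signed permutation
   sigma given by the permutation s of {1..n} and the signs e
   (sigma(i) = - s(i) iff e i). *)
Definition signed_letters (q : R) (ws : seq R) (n : nat)
  (s : 'S_n) (e : {ffun 'I_n -> bool}) : seq R :=
  [seq signed_val q (e i) (nth 0 ws (s i)) | i <- enum 'I_n].

Definition summand (q alpha : R) (y : seq int) (n : nat) (vs : seq R) : R :=
  (\prod_(0 <= i < n) \prod_(i.+1 <= j < n) pairf q (nth 0 vs i) (nth 0 vs j))
  * \prod_(0 <= i < size y) phi q alpha (nth 0 y i) (nth 0 vs i).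

Definition Fy (q alpha : R) (y : seq int) (ws : seq R) : R :=
  let n := size ws in
  let M := size y in
  if (n < M)%N then 0 else
  Vk q (n - M) * alpha ^+ (n - M) *
  \sum_(s : 'S_n) \sum_(e : {ffun 'I_n -> bool})
     summand q alpha y n (signed_letters q ws s e).

(* A generic alphabet: none of the denominators occurring in the summands of
   F_y vanish, i.e. w_i not in {0, 1, 1/q}, q w_i^2 <> 1, and for i <> j,
   w_i <> w_j and q w_i w_j <> 1. *)
Definition generic (q : R) (ws : seq R) : Prop :=
  (forall i, (i < size ws)%N ->
     let x := nth 0 ws i in
     [/\ x != 0, x != 1, q * x != 1 & q * x ^+ 2 != 1]) /\
  (forall i j, (i < size ws)%N -> (j < size ws)%N -> i <> j ->
     nth 0 ws i != nth 0 ws j /\ q * nth 0 ws i * nth 0 ws j != 1).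

Definition remove_at (ws : seq R) (k : nat) : seq R :=
  take k ws ++ drop k.+1 ws.

End Defs.

(* Main.v *)
Require Import Defs.
From HB Require Import structures.
From mathcomp Require Import all_boot all_order all_algebra all_fingroup.
From mathcomp Require Import all_classical all_reals all_analysis.
From mathcomp Require Import zify ring lra.
Import Order.TTheory GRing.Theory Num.Theory.
Import numFieldNormedType.Exports.
Local Open Scope ring_scope.
Local Open Scope classical_set_scope.

Section A.
Variable R : realType.
Variable F : set_system R.
Context {FF : Filter F}.

Lemma cvgdiv (f g : R -> R) (a b : R) : f t @[t --> F] --> a -> g t @[t --> F] --> b -> b != 0 ->
  f t / g t @[t --> F] --> a / b.
Proof. move=> fa gb b0. apply: cvgM => //. exact: cvgV. Qed.

Lemma cvgmul (f g : R -> R) (a b : R) : f t @[t --> F] --> a -> g t @[t --> F] --> b ->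
  f t * g t @[t --> F] --> a * b.
Proof. move=> fa gb; exact: cvgM. Qed.

Lemma cvgadd (f g : R -> R) (a b : R) : f t @[t --> F] --> a -> g t @[t --> F] --> b ->
  f t + g t @[t --> F] --> a + b.
Proof. move=> fa gb; exact: cvgD. Qed.

Lemma cvgsub (f g : R -> R) (a b : R) : f t @[t --> F] --> a -> g t @[t --> F] --> b ->
  f t - g t @[t --> F] --> a - b.
Proof. move=> fa gb; exact: cvgB. Qed.

Lemma cvgc (a : R) : (fun _ : R => a) @ F --> a.
Proof. exact: cvg_cst. Qed.

Lemma cvgexpn (f : R -> R) (a : R) n : f t @[t --> F] --> a -> f t ^+ n @[t --> F] --> a ^+ n.
Proof.
move=> fa; elim: n => [|n IH].
  by under eq_fun do rewrite expr0; rewrite expr0; exact: cvg_cst.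
under eq_fun do rewrite exprS; rewrite exprS; exact: cvgmul.
Qed.

Lemma cvgexpz (f : R -> R) (a : R) (z : int) : f t @[t --> F] --> a -> a != 0 ->
  f t ^ z @[t --> F] --> a ^ z.
Proof.
move=> fa a0; case: z => n /=; first exact: cvgexpn.
apply: cvgV; first by rewrite expf_neq0.
exact: cvgexpn.
Qed.

Lemma cvgsum (I : Type) (r : seq I) (P : pred I) (f : I -> R -> R) (l : I -> R) :
  (forall j, P j -> f j t @[t --> F] --> l j) ->
  \sum_(j <- r | P j) f j t @[t --> F] --> \sum_(j <- r | P j) l j.
Proof.
move=> h; elim: r => [|a r IH].
  by under eq_fun do rewrite big_nil; rewrite big_nil; exact: cvg_cst.
under eq_fun do rewrite big_cons; rewrite big_cons.
case: (boolP (P a)) => Pa //; exact: cvgadd (h _ Pa) IH.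
Qed.

Lemma cvgprod (I : Type) (r : seq I) (P : pred I) (f : I -> R -> R) (l : I -> R) :
  (forall j, P j -> f j t @[t --> F] --> l j) ->
  \prod_(j <- r | P j) f j t @[t --> F] --> \prod_(j <- r | P j) l j.
Proof.
move=> h; elim: r => [|a r IH].
  by under eq_fun do rewrite big_nil; rewrite big_nil; exact: cvg_cst.
under eq_fun do rewrite big_cons; rewrite big_cons.
case: (boolP (P a)) => Pa //; exact: cvgmul (h _ Pa) IH.
Qed.
Lemma cvgopp (f : R -> R) (a : R) : f t @[t --> F] --> a -> - f t @[t --> F] --> - a.
Proof. move=> h; exact: cvgN. Qed.
End A.

Section B.
Variable R : realType.
Variables q alpha : R.
Hypothesis q0 : q != 0.

Lemma cvg_t : (fun t : R => t) @ 0^' --> (0 : R).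
Proof. exact: cvg_within_filter cvg_id. Qed.

Ltac cvgstep := lazymatch goal with
 | |- cvg_to (nbhs (fmap (fun _ => ?c) _)) _ => apply: cvgc
 | |- cvg_to (nbhs (fmap (fun t => t) _)) _ => apply: cvg_t
 | |- cvg_to (nbhs (fmap (fun t => GRing.mul _ (GRing.inv _)) _)) _ => apply: cvgdiv
 | |- cvg_to (nbhs (fmap (fun t => GRing.mul _ _) _)) _ => apply: cvgmul
 | |- cvg_to (nbhs (fmap (fun t => exprz _ _) _)) _ => apply: cvgexpz
 | |- cvg_to (nbhs (fmap (fun t => GRing.exp _ _) _)) _ => apply: cvgexpn
 | |- cvg_to (nbhs (fmap (fun t => Algebra.add _ (Algebra.opp _)) _)) _ => apply: cvgsub
 | |- cvg_to (nbhs (fmap (fun t => Algebra.add _ _) _)) _ => apply: cvgadd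
 | |- cvg_to (nbhs (fmap (fun t => Algebra.opp _) _)) _ => apply: cvgopp
 end.
Ltac cvgauto := repeat cvgstep.

Lemma divMr (a b c : R) : c != 0 -> a / b = (a * c) / (b * c).
Proof. move=> c0; by rewrite invfM mulrACA divff // mulr1. Qed.

Lemma mynear_cvg (f g : R -> R) (l : R) : (\forall t \near 0^', g t = f t) ->
  g t @[t --> 0^'] --> l -> f t @[t --> 0^'] --> l.
Proof. move=> h gl; apply: cvg_trans gl; exact: near_eq_cvg. Qed.

Definition P3 (x t : R) := (1 - q^+2 * x * t) / (1 - q * x * t) * ((q * t - x) / (q * (t - x))).

Lemma e3 x t : t != 0 -> pairf q (1 / (q * t)) x = P3 x t.
Proof.
move=> t0; have qt0 : q * t != 0 by rewrite mulf_neq0.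
rewrite /pairf /P3 [X in X * _](divMr _ _ _ qt0) [X in _ * X](divMr _ _ _ qt0).
by congr (_ / _ * (_ / _)); field; rewrite t0 q0.
Qed.

Lemma mycvg_to (a b : R) (f : R -> R) : a = b -> f t @[t --> 0^'] --> a -> f t @[t --> 0^'] --> b.
Proof. by move=> <-. Qed.

Ltac simp0 := rewrite ?(mulr0, mul0r, subr0, sub0r, addr0, add0r, expr0n, oppr_eq0, mulf_neq0, oner_eq0, invr_eq0, mulr1, mul1r, divr1) //=.

Lemma l3 x : x != 0 -> pairf q (1 / (q * t)) x @[t --> 0^'] --> q^-1.
Proof.
move=> x0.
apply: (@mynear_cvg _ (P3 x)).
  near=> t; rewrite e3 //; near: t; exact: nbhs_dnbhs_neq.
apply: (mycvg_to (P3 x 0)); first by rewrite /P3; field; rewrite x0 q0.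
rewrite /P3; cvgauto; simp0.
Unshelve. all: end_near.
Qed.

Lemma l1 x : x != 0 -> pairf q t x @[t --> 0^'] --> q.
Proof.
move=> x0; apply: (mycvg_to (pairf q 0 x)); first by rewrite /pairf; field; rewrite x0.
rewrite /pairf; cvgauto; simp0.
Qed.

Lemma l2 x : x != 0 -> pairf q x t @[t --> 0^'] --> (1 : R).
Proof.
move=> x0; apply: (mycvg_to (pairf q x 0)); first by rewrite /pairf; field; rewrite x0.
rewrite /pairf; cvgauto; simp0.
Qed.

Definition P4 (x t : R) := (q * x * t - q) / (q * x * t - 1) * ((q * t - x) / (q * (t - x))).

Lemma e4 x t : t != 0 -> pairf q x (1 / (q * t)) = P4 x t.
Proof.
move=> t0; have qt0 : q * t != 0 by rewrite mulf_neq0.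
rewrite /pairf /P4 [X in X * _](divMr _ _ _ qt0) [X in _ * X](divMr _ _ _ qt0).
by congr (_ / _ * (_ / _)); field; rewrite t0 q0.
Qed.

Lemma l4 x : x != 0 -> pairf q x (1 / (q * t)) @[t --> 0^'] --> (1 : R).
Proof.
move=> x0.
apply: (@mynear_cvg _ (P4 x)).
  near=> t; rewrite e4 //; near: t; exact: nbhs_dnbhs_neq.
apply: (mycvg_to (P4 x 0)); first by rewrite /P4; field; rewrite x0 q0.
rewrite /P4; cvgauto; simp0.
Unshelve. all: end_near.
Qed.

Lemma l5 z : phi q alpha z t @[t --> 0^'] --> (0 : R).
Proof.
apply: (mycvg_to (phi q alpha z 0)); first by rewrite /phi; simp0.
rewrite /phi; cvgauto; simp0.
Qed.

Definition P6 z (t : R) := ((1 - q - alpha) * q * t ^+ 2 + alpha * t) / (q * t ^+ 2 - 1) * ((1 - q) / (q * t - 1))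
  * ((q * t - q) / (q * t - 1)) ^ (z - 1).

Lemma e6 z t : t != 0 -> phi q alpha z (1 / (q * t)) = P6 z t.
Proof.
move=> t0; have qt0 : q * t != 0 by rewrite mulf_neq0.
have qt20 : q * t ^+ 2 != 0 by rewrite mulf_neq0 // expf_neq0.
rewrite /phi /P6 [X in X * _ * _](divMr _ _ _ qt20) [X in _ * X * _](divMr _ _ _ qt0).
rewrite [X in _ * _ * (X ^ _)](divMr _ _ _ qt0).
by congr (_ / _ * (_ / _) * ((_ / _) ^ _)); field; rewrite t0 q0.
Qed.

Lemma l6 z : phi q alpha z (1 / (q * t)) @[t --> 0^'] --> (0 : R).
Proof.
apply: (@mynear_cvg _ (P6 z)).
  near=> t; rewrite e6 //; near: t; exact: nbhs_dnbhs_neq.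
apply: (mycvg_to (P6 z 0)); first by rewrite /P6; simp0.
rewrite /P6; cvgauto; simp0.
Unshelve. all: end_near.
Qed.
End B.

Section C.
Variable R : realType.
Variables q alpha : R.

Lemma bump_ltn (i a b : nat) : (bump i a < bump i b)%N = (a < b)%N.
Proof. rewrite /bump; case: leqP => ha; case: leqP => hb /=; lia. Qed.

Lemma i_lt_bump (i b : nat) : (i < bump i b)%N = (i <= b)%N.
Proof. rewrite /bump; case: leqP => hb /=; lia. Qed.

Lemma bump_lt_i (i a : nat) : (bump i a < i)%N = (a < i)%N.
Proof. rewrite /bump; case: leqP => hb /=; lia. Qed.

Definition ins (i : nat) (v : R) (f : nat -> R) (j : nat) : R :=
  if (j < i)%N then f j else if j == i then v else f j.-1.

Lemma ins_bump i v f j : ins i v f (bump i j) = f j.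
Proof.
rewrite /ins /bump; case: (leqP i j) => h /=.
  case: ifP => h1; first lia. case: ifP => h2; first lia. by [].
by rewrite h.
Qed.

Lemma ins_i i v f : ins i v f i = v.
Proof. by rewrite /ins ltnn eqxx. Qed.

Lemma dprodE (m : nat) (F : nat -> nat -> R) :
  \prod_(0 <= a < m) \prod_(a.+1 <= b < m) F a b =
  \prod_(a < m) \prod_(b < m) (if (a < b)%N then F a b else 1).
Proof.
rewrite big_mkord; apply: eq_bigr => a _; rewrite big_geq_mkord big_mkcond /=.
by [].
Qed.

Lemma big_lift n (i : 'I_n.+1) (F : 'I_n.+1 -> R) :
  \prod_(a < n.+1) F a = F i * \prod_(a < n) F (lift i a).
Proof. by rewrite (bigD1_ord i). Qed.

Lemma dprod_ins n (i : 'I_n.+1) v f :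
  \prod_(a < n.+1) \prod_(b < n.+1)
     (if (a < b)%N then pairf q (ins i v f a) (ins i v f b) else 1)
  = \prod_(b < n) (if (i <= b)%N then pairf q v (f b) else 1)
    * \prod_(a < n) (if (a < i)%N then pairf q (f a) v else 1)
    * \prod_(a < n) \prod_(b < n) (if (a < b)%N then pairf q (f a) (f b) else 1).
Proof.
rewrite (@big_lift _ i) (@big_lift _ i) ltnn mul1r.
under [X in _ * X = _]eq_bigr do rewrite (@big_lift _ i).
rewrite big_split /= mulrA; congr (_ * _ * _).
- by apply: eq_bigr => b _; rewrite i_lt_bump ins_i ins_bump.
- by apply: eq_bigr => a _; rewrite bump_lt_i ins_i ins_bump.
- apply: eq_bigr => a _; apply: eq_bigr => b _.
  by rewrite bump_ltn !ins_bump.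
Qed.

Lemma phi_ins_ge (y : seq int) (i : nat) v f : (size y <= i)%N ->
  \prod_(0 <= a < size y) phi q alpha (nth 0 y a) (ins i v f a)
  = \prod_(0 <= a < size y) phi q alpha (nth 0 y a) (f a).
Proof.
move=> h; apply: eq_big_nat => a /andP[_ ha].
by rewrite /ins (leq_trans ha h).
Qed.

Lemma phi_ins_lt (y : seq int) (i : nat) v f (h : (i < size y)%N) :
  \prod_(0 <= a < size y) phi q alpha (nth 0 y a) (ins i v f a)
  = phi q alpha (nth 0 y i) v *
    \prod_(a < size y | a != Ordinal h) phi q alpha (nth 0 y a) (ins i 0 f a).
Proof.
rewrite big_mkord (bigD1 (Ordinal h)) //= ins_i; congr (_ * _).
apply: eq_bigr => a ha; rewrite /ins; case: ifP => // _.
have -> : (nat_of_ord a == i) = false by apply/negbTE.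
by [].
Qed.

Lemma sum_perm (n : nat) (k0 : 'I_n.+1) (H : 'S_n.+1 -> R) :
  \sum_(s : 'S_n.+1) H s = \sum_(i < n.+1) \sum_(s : 'S_n) H (lift_perm i k0 s).
Proof.
rewrite (partition_big (fun s : 'S_n.+1 => (s^-1)%g k0) xpredT) //=.
apply: eq_bigr => i0 _.
rewrite (reindex (lift_perm i0 k0)) /=; last first.
  pose ulsf i (s : 'S_n.+1) k := odflt k (unlift (s i) (s (lift i k))).
  have ulsfK i (s : 'S_n.+1) k: lift (s i) (ulsf i s k) = s (lift i k).
    rewrite /ulsf; have:= neq_lift i k.
    by rewrite -(can_eq (permK s)) => /unlift_some[] ? ? ->.
  have inj_ulsf: injective (ulsf i0 _).
    move=> s; apply: can_inj (ulsf (s i0) s^-1%g) _ => k'.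
    by rewrite {1}/ulsf ulsfK !permK liftK.
  exists (fun s => perm (inj_ulsf s)) => [s _ | s].
    by apply/permP=> k'; rewrite permE /ulsf lift_perm_lift lift_perm_id liftK.
  rewrite inE /= => /eqP si; have si0 : s i0 = k0 by rewrite -si permKV.
  apply/permP=> k.
  case: (unliftP i0 k) => [k'|] ->; rewrite ?lift_perm_id //.
  by rewrite lift_perm_lift -si0 permE ulsfK.
apply: eq_bigl => s.
by rewrite -{2}(lift_perm_id i0 k0 s) permK eqxx.
Qed.

Definition ext {n} (i : 'I_n.+1) (b : bool) (e : {ffun 'I_n -> bool}) : {ffun 'I_n.+1 -> bool} :=
  [ffun j => if unlift i j is Some j' then e j' else b].

Lemma sum_sign n (i : 'I_n.+1) (G : {ffun 'I_n.+1 -> bool} -> R) :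
  \sum_(e : {ffun 'I_n.+1 -> bool}) G e
  = \sum_(b : bool) \sum_(e : {ffun 'I_n -> bool}) G (ext i b e).
Proof.
rewrite pair_big /=.
rewrite (reindex (fun p : bool * {ffun 'I_n -> bool} => ext i p.1 p.2)) //.
exists (fun e : {ffun 'I_n.+1 -> bool} => (e i, [ffun j => e (lift i j)])).
  move=> [b e] _ /=; congr pair; first by rewrite ffunE unlift_none.
  by apply/ffunP => j; rewrite !ffunE liftK.
move=> e _; apply/ffunP => j; rewrite ffunE /=.
by case: (unliftP i j) => [j'|] ->; rewrite ?liftK ?unlift_none ?ffunE.
Qed.

Lemma size_letters (ws : seq R) n (s : 'S_n) e : size (signed_letters q ws s e) = n.
Proof. by rewrite size_map size_enum_ord. Qed.

Lemma nth_letters (ws : seq R) n (s : 'S_n) e (j : 'I_n) :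
  nth 0 (signed_letters q ws s e) j = signed_val q (e j) (nth 0 ws (s j)).
Proof. by rewrite /signed_letters (nth_map j) ?size_enum_ord // nth_ord_enum. Qed.

Lemma nth_set_lift (ws : seq R) n (k0 : 'I_n.+1) (hs : size ws = n.+1) t (m : 'I_n) :
  nth 0 (set_nth 0 ws k0 t) (lift k0 m) = nth 0 (remove_at ws k0) m.
Proof.
rewrite nth_set_nth /= /remove_at nth_cat size_take hs ltn_ord.
have -> : (bump k0 m == k0) = false.
  by apply/negbTE; rewrite /bump; case: leqP => h /=; lia.
rewrite /bump; case: (ltnP m k0) => h.
  by rewrite nth_take // (leqNgt k0 m) h.
rewrite nth_drop /=; congr nth; rewrite add1n; lia.
Qed.

Lemma letters_ins (ws : seq R) n (k0 : 'I_n.+1) (hs : size ws = n.+1) t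
  (i : 'I_n.+1) (s : 'S_n) b e :
  nth 0 (signed_letters q (set_nth 0 ws k0 t) (lift_perm i k0 s) (ext i b e)) =
  ins i (signed_val q b t) (nth 0 (signed_letters q (remove_at ws k0) s e)).
Proof.
apply/funext => j; case: (ltnP j n.+1) => hj.
  have -> : j = Ordinal hj by [].
  case: (unliftP i (Ordinal hj)) => [j'|] ->.
    rewrite nth_letters ffunE liftK lift_perm_lift /= ins_bump nth_letters.
    by rewrite nth_set_lift.
  rewrite nth_letters ffunE unlift_none lift_perm_id ins_i.
  by rewrite nth_set_nth /= eqxx.
rewrite nth_default ?size_letters // /ins.
have -> : (j < i)%N = false by apply/negbTE; rewrite -leqNgt; apply: leq_trans hj; apply: ltnW.
have -> : (j == i) = false by apply/negbTE; apply/eqP => h; move: hj; rewrite h leqNgt ltn_ord.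
rewrite nth_default // size_letters; case: j hj => //= j hj.
Qed.

Lemma prod_if_le n (i : nat) (c : R) : (i <= n)%N ->
  \prod_(b < n) (if (i <= b)%N then c else 1) = c ^+ (n - i).
Proof.
move=> hi; rewrite -(big_mkord xpredT (fun b => if (i <= b)%N then c else 1)).
rewrite (big_cat_nat _ (n:=i)) //= big1_seq ?mul1r; last first.
  by move=> b /andP[_]; rewrite mem_index_iota => /andP[_ hb]; rewrite leqNgt hb.
rewrite (eq_big_nat _ _ (F2 := fun _ => c)); first by rewrite prodr_const_nat.
by move=> b /andP[-> _].
Qed.

Lemma prod_if_1 n (P : pred nat) : \prod_(a < n) (if P a then (1 : R) else 1) = 1.
Proof. by apply: big1 => a _; case: ifP. Qed.

Lemma sum_shift n M (g : nat -> R) : (M <= n)%N ->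
  \sum_(i < n.+1) (if (M <= i)%N then g (n - i)%N else 0) = \sum_(j < (n - M).+1) g j.
Proof.
move=> hM.
rewrite -(big_mkord xpredT (fun i => if (M <= i)%N then g (n - i)%N else 0)).
rewrite (big_cat_nat _ (n:=M)) //=; last by apply: leqW.
rewrite big1_seq ?add0r; last first.
  by move=> b /andP[_]; rewrite mem_index_iota => /andP[_ hb]; rewrite leqNgt hb.
rewrite -{1}[M]add0n big_addn big_nat_rev /=.
have -> : (n.+1 - M)%N = (n - M).+1 by lia.
rewrite big_mkord; apply: eq_bigr => j _; have hj := ltn_ord j.
rewrite (_ : (M <= _)%N = true); last by apply/idP; lia.
congr g; lia.
Qed.

Lemma Vk_step m (hq0 : 0 < q) (hq1 : q != 1) :
  Vk q m.+1 * \sum_(j < m.+1) (q ^+ j + q^-1 ^+ j) = Vk q m.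
Proof.
have q0 : q != 0 := lt0r_neq0 hq0.
have qm1 : q - 1 != 0 by rewrite subr_eq0.
have qi1 : q^-1 - 1 != 0 by rewrite subr_eq0 invr_eq1.
have S1 : \sum_(j < m.+1) q ^+ j = (q ^+ m.+1 - 1) / (q - 1).
  by rewrite subrX1 mulrAC divff ?mul1r.
have S2 : \sum_(j < m.+1) q^-1 ^+ j = (q^-1 ^+ m.+1 - 1) / (q^-1 - 1).
  by rewrite subrX1 mulrAC divff ?mul1r.
have hP : forall k, \prod_(1 <= i < k) ((1 - q ^+ i) * (1 + q ^+ i.-1)) != 0.
  move=> k; rewrite prodf_seq_neq0; apply/allP => i; rewrite mem_index_iota.
  move=> /andP[h1 _] /=; rewrite mulf_neq0 //.
    by rewrite subr_eq0 eq_sym pexpr_eq1 // ltW.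
  by rewrite lt0r_neq0 // addr_gt0 // exprn_gt0.
rewrite big_split /= S1 S2 /Vk (binS m 1) bin1 exprD big_nat_recr //=.
have := hP m.+1.
set P := \prod_(1 <= i < m.+1) _ => P0.
rewrite !exprVn !exprS.
have X0 : q ^+ m != 0 by rewrite expf_neq0.
have a1 : 1 - q * q ^+ m != 0 by rewrite -exprS subr_eq0 eq_sym pexpr_eq1 // ltW.
have a2 : 1 + q ^+ m != 0 by rewrite lt0r_neq0 // addr_gt0 // exprn_gt0.
have a3 : 1 - q != 0 by rewrite subr_eq0 eq_sym.
field.
by rewrite P0 q0 X0 qm1 a1 a2 mulN1r a3.
Qed.
End C.

Arguments ins {R}.

Section D.
Variable R : realType.
Variables q alpha : R.
Hypothesis hq0 : 0 < q.

Definition sumf (y : seq int) (m : nat) (f : nat -> R) :=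
  (\prod_(0 <= i < m) \prod_(i.+1 <= j < m) pairf q (f i) (f j))
  * \prod_(0 <= i < size y) phi q alpha (nth 0 y i) (f i).

Lemma cvg_ext {f g : R -> R} {l : R} : (forall t, f t = g t) ->
  g t @[t --> 0^'] --> l -> f t @[t --> 0^'] --> l.
Proof. by move=> h; rewrite (funext h). Qed.

Definition A1 n (i : nat) v (f : nat -> R) :=
  \prod_(b < n) (if (i <= b)%N then pairf q v (f b) else 1).
Definition A2 n (i : nat) v (f : nat -> R) :=
  \prod_(a < n) (if (a < i)%N then pairf q (f a) v else 1).
Definition DD n (f : nat -> R) :=
  \prod_(a < n) \prod_(b < n) (if (a < b)%N then pairf q (f a) (f b) else 1).
Definition PH y (f : nat -> R) := \prod_(0 <= a < size y) phi q alpha (nth 0 y a) (f a).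

Lemma sumfE y n f : sumf y n f = DD n f * PH y f.
Proof. by rewrite /sumf dprodE. Qed.

Lemma sumf_ins y n (i : 'I_n.+1) v f :
  sumf y n.+1 (ins i v f) = A1 n i v f * A2 n i v f * DD n f * PH y (ins i v f).
Proof. by rewrite sumfE /DD dprod_ins. Qed.

Lemma lim_term y n (i : 'I_n.+1) (b : bool) (f : nat -> R)
  (hf : forall j, (j < n)%N -> f j != 0) :
  sumf y n.+1 (ins i (signed_val q b t) f) @[t --> 0^'] -->
  (if (size y <= i)%N then (if b then q^-1 else q) ^+ (n - i) else 0) * sumf y n f.
Proof.
have q0 : q != 0 := lt0r_neq0 hq0.
apply: (cvg_ext (fun t => sumf_ins y n i (signed_val q b t) f)).
rewrite sumfE.
have hA1 : A1 n i (signed_val q b t) f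
   @[t --> 0^'] --> \prod_(b0 < n) (if (i <= b0)%N then (if b then q^-1 else q) else 1).
  apply: cvgprod => j _; case: ifP => _; last exact: cvgc.
  destruct b; rewrite /signed_val /=; [apply: l3 | apply: l1] => //; apply: hf; exact: ltn_ord.
have hA2 : A2 n i (signed_val q b t) f
   @[t --> 0^'] --> \prod_(a < n) (if (a < i)%N then (1 : R) else 1).
  apply: cvgprod => j _; case: ifP => _; last exact: cvgc.
  destruct b; rewrite /signed_val /=; [apply: l4 | apply: l2] => //; apply: hf; exact: ltn_ord.
case: (boolP (size y <= i)%N) => hyi.
  apply: (cvg_ext (g := fun t => A1 n i (signed_val q b t) f * A2 n i (signed_val q b t) f * DD n f * PH y f)).
    by move=> t; rewrite /PH phi_ins_ge.
  apply: (@mycvg_to _ ((\prod_(b0 < n) (if (i <= b0)%N then (if b then q^-1 else q) else 1))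
     * \prod_(a < n) (if (a < i)%N then (1 : R) else 1) * DD n f * PH y f)).
    rewrite prod_if_le; last by rewrite -ltnS ltn_ord.
    have -> : \prod_(a < n) (if (a < i)%N then (1:R) else 1) = 1 by apply: big1 => a _; case: ifP.
    by rewrite mulr1 mulrA.
  apply: cvgmul; last exact: cvgc.
  apply: cvgmul; last exact: cvgc.
  exact: cvgmul.
have {}hyi : (i < size y)%N by rewrite ltnNge.
apply: (cvg_ext (g := fun t => A1 n i (signed_val q b t) f * A2 n i (signed_val q b t) f * DD n f
   * (phi q alpha (nth 0 y i) (signed_val q b t) *
    \prod_(a < size y | a != Ordinal hyi) phi q alpha (nth 0 y a) (ins i 0 f a)))).
  by move=> t; rewrite /PH (@phi_ins_lt _ _ _ _ _ _ _ hyi).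
apply: (@mycvg_to _ ((\prod_(b0 < n) (if (i <= b0)%N then (if b then q^-1 else q) else 1))
     * \prod_(a < n) (if (a < i)%N then (1 : R) else 1) * DD n f
     * (0 * \prod_(a < size y | a != Ordinal hyi) phi q alpha (nth 0 y a) (ins i 0 f a)))).
  by rewrite !mul0r mulr0.
apply: cvgmul.
  apply: cvgmul; last exact: cvgc.
  exact: cvgmul.
apply: cvgmul; last exact: cvgc.
destruct b; rewrite /signed_val /=; [apply: l6 | apply: l5] => //.
Qed.

Lemma summandE y m vs : summand q alpha y m vs = sumf y m (nth 0 vs).
Proof. by []. Qed.

Lemma FyE y ws m : size ws = m -> Fy q alpha y ws =
  (if (m < size y)%N then 0 else Vk q (m - size y) * alpha ^+ (m - size y) *
   \sum_(s : 'S_m) \sum_(e : {ffun 'I_m -> bool}) summand q alpha y m (signed_letters q ws s e)).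
Proof. by move=> <-. Qed.

Lemma sum_factor (I J K L : finType) (g : I -> K -> R) (h : J -> L -> R) :
  \sum_(i : I) \sum_(j : J) \sum_(k : K) \sum_(l : L) g i k * h j l
  = (\sum_(i : I) \sum_(k : K) g i k) * \sum_(j : J) \sum_(l : L) h j l.
Proof.
rewrite big_distrl /=; apply: eq_bigr => i _.
rewrite big_distrr /=; apply: eq_bigr => j _.
rewrite big_distrl /=; apply: eq_bigr => k _.
by rewrite big_distrr.
Qed.

Lemma main_sec (hq1 : q != 1) N M (hM1 : (1 <= M)%N) (hMN : (M <= N)%N)
  ws (hws : size ws = N) y (hy : size y = M) k (hk : (k < N)%N)
  (hgen : generic q (remove_at ws k)) :
  Fy q alpha y (set_nth 0 ws k t) @[t --> 0^'] --> alpha * Fy q alpha y (remove_at ws k).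
Proof.
have q0 : q != 0 := lt0r_neq0 hq0.
subst M.
case: N hMN hws hk => [|n] hMN hws hk; first by move: (leq_trans hM1 hMN).
set ws' := remove_at ws k.
have hs' : size ws' = n.
  rewrite /ws' /remove_at size_cat size_take size_drop hws hk; lia.
pose k0 : 'I_n.+1 := Ordinal hk.
have hsz : forall t, size (set_nth 0 ws k t) = n.+1.
  by move=> t; rewrite size_set_nth hws; apply/maxn_idPr.
pose Fl (s : 'S_n) (e : {ffun 'I_n -> bool}) := nth 0 (signed_letters q ws' s e).
apply: (cvg_ext (g := fun t => Vk q (n.+1 - size y) * alpha ^+ (n.+1 - size y) *
   \sum_(i < n.+1) \sum_(s : 'S_n) \sum_(b : bool) \sum_(e : {ffun 'I_n -> bool})
      sumf y n.+1 (ins i (signed_val q b t) (Fl s e)))).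
  move=> t; rewrite (@FyE y _ _ (hsz t)) ltnNge hMN /= (@sum_perm _ _ k0).
  congr (_ * _); apply: eq_bigr => i _; apply: eq_bigr => s _.
  rewrite (@sum_sign _ _ i); apply: eq_bigr => b _; apply: eq_bigr => e _.
  by rewrite summandE (@letters_ins _ q ws n k0 hws t).
rewrite (@FyE y _ _ hs').
apply: (@mycvg_to _ (Vk q (n.+1 - size y) * alpha ^+ (n.+1 - size y) *
   \sum_(i < n.+1) \sum_(s : 'S_n) \sum_(b : bool) \sum_(e : {ffun 'I_n -> bool})
      ((if (size y <= i)%N then (if b then q^-1 else q) ^+ (n - i) else 0) * sumf y n (Fl s e)))).
  rewrite (@sum_factor _ _ _ _ (fun (i : 'I_n.+1) (b : bool) =>
     if (size y <= i)%N then (if b then q^-1 else q) ^+ (n - i) else 0)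
     (fun s e => sumf y n (Fl s e))).
  set X := (X in _ * (_ * X) = _).
  have -> : \sum_(s : 'S_n) \sum_(e : {ffun 'I_n -> bool})
     summand q alpha y n (signed_letters q ws' s e) = X by [].
  have -> : \sum_(i < n.+1) \sum_(b : bool)
     (if (size y <= i)%N then (if b then q^-1 else q) ^+ (n - i) else 0)
     = \sum_(i < n.+1) (if (size y <= i)%N then q ^+ (n - i) + q^-1 ^+ (n - i) else 0).
    apply: eq_bigr => i _; rewrite big_bool /=.
    by case: ifP => _; [rewrite addrC | rewrite addr0].
  case: (ltnP n (size y)) => hn.
    rewrite big1 ?(mulr0, mul0r) //.
    move=> i _; rewrite ifF //; apply/negbTE; rewrite -ltnNge.
    by apply: leq_trans (ltn_ord i) _.
  rewrite (@sum_shift _ n (size y) (fun j => q ^+ j + q^-1 ^+ j) hn) (subSn hn) exprS.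
  rewrite -(@Vk_step _ q (n - size y) hq0 hq1).
  ring.
apply: cvgmul; first exact: cvgc.
apply: cvgsum => i _; apply: cvgsum => s _; apply: cvgsum => b _; apply: cvgsum => e _.
apply: lim_term => j hj.
rewrite /Fl -[j]/(nat_of_ord (Ordinal hj)) nth_letters.
have := (proj1 hgen) (s (Ordinal hj)).
rewrite -/ws' hs' ltn_ord => /(_ isT) [w0 _ _ _].
case: (e _); rewrite /signed_val //.
by rewrite div1r invr_eq0 mulf_neq0.
Qed.
End D.

(* k is 0-based here: the letter w_{k+1} is specialized to 0, the
   specialization being the limit w_{k+1} -> 0 (w_{k+1} <> 0). *)
Theorem proposition6p3 (R : realType) (q alpha : R)
  (hq0 : 0 < q) (hq1 : q != 1) (halpha : 0 <= alpha)
  (N M : nat) (hM1 : (1 <= M)%N) (hMN : (M <= N)%N)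
  (ws : seq R) (hws : size ws = N) (y : seq int) (hy : size y = M)
  (k : nat) (hk : (k < N)%N)
  (hgen : generic q (remove_at ws k)) :
  Fy q alpha y (set_nth 0 ws k t) @[t --> 0^']
    --> alpha * Fy q alpha y (remove_at ws k).
Proof.
exact: (@main_sec R q alpha hq0 hq1 N M hM1 hMN ws hws y hy k hk hgen).
Qed.
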